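(* Let $p$ be a positive stochastic choice function on a finite set $X$ such that there exist $a,b,c\in X$ with $a\not\sim_p b$, $b\not\sim_p c$, $a\not\sim_p c$. Then $p$ satisfies ISA-1 and ISA-2 if and only if $p$ is a strict nondegenerate NSC.
   Context: $\mathscr{A}$ is the collection of nonempty subsets of $X$; $p(x,A)=0$ for $x\notin A$, $\sum_{a\in A}p(a,A)=1$, $p(a,A)>0$ for $a\in A$; $A\cup x=A\cup\{x\}$. $a\sim_p b$ means $\frac{p(a,A)}{p(b,A)}=\frac{p(a,\{a,b\})}{p(b,\{a,b\})}$ for all $A\ni a,b$. ISA-1: for any $A\in\mathscr{A}$, $a,b\in A$, $x\notin A$: if $\frac{p(a,\{a,x\})}{p(x,\{a,x\})}=\frac{p(a,\{a,b,x\})}{p(x,\{a,b,x\})}$ and $\frac{p(b,\{b,x\})}{p(x,\{b,x\})}=\frac{p(b,\{a,b,x\})}{p(x,\{a,b,x\})}$, then $\frac{p(a,A)}{p(b,A)}=\frac{p(a,A\cup x)}{p(b,A\cup x)}$. ISA-2: for any $A,B,C\in\mathscr{A}$, $a\in A\cap B$, $b\in A\cap C$, $x\in B\cap C$: if $\frac{p(a,\{a,x\})}{p(x,\{a,x\})}\ne\frac{p(a,B)}{p(x,B)}$ and $\frac{p(b,\{b,x\})}{p(x,\{b,x\})}\ne\frac{p(b,C)}{p(x,C)}$, then $\frac{p(a,A)}{p(b,A)}=\frac{p(a,A\cup x)}{p(b,A\cup x)}$. NSC: there exist a partition $X_1,\dots,X_K$ of $X$, $u:X\to\mathbb{R}_{++}$,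 $v:\bigcup_i2^{X_i}\to\mathbb{R}_+$, $v(\emptyset)=0$, with $p(a,A)=\frac{v(A\cap X_i)}{\sum_j v(A\cap X_j)}\frac{u(a)}{\sum_{b\in A\cap X_i}u(b)}$ for $a\in A\cap X_i$. Nondegenerate: at most one $i$ for which some $a\in X_i$ satisfies $\frac{\sum_{x\in A_i}u(x)}{v(A_i)}=\frac{u(a)}{v(\{a\})}$ for all $A_i\subseteq X_i$ containing $a$. Strict: for every $i$, every $A_i\subseteq X_i$, $a\in A_i$ and $x\in X_i\setminus A_i$, if $\frac{u(a)+u(x)}{u(x)}=\frac{v(\{a,x\})}{v(\{x\})}$ then $\frac{\sum_{a'\in A_i}u(a')+u(x)}{\sum_{a'\in A_i}u(a')}=\frac{v(A_i\cup x)}{v(A_i)}$. *)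

(* Defs.v *)
From HB Require Import structures.
From mathcomp Require Import all_boot all_order all_algebra.
From mathcomp Require Import reals.
Set Implicit Arguments. Unset Strict Implicit. Unset Printing Implicit Defensive.
Import Order.TTheory GRing.Theory Num.Theory.
Local Open Scope ring_scope.

Section SCF.
Variables (R : realType) (T : finType).
Implicit Types (p : T -> {set T} -> R) (u : T -> R) (v : {set T} -> R)
  (P : {set {set T}}).

Definition positive_scf p : Prop :=
  forall A : {set T}, A != set0 ->
    (forall x, x \notin A -> p x A = 0) /\
    \sum_(a in A) p a A = 1 /\
    (forall a, a \in A -> 0 < p a A).

Definition simp p (a b : T) : Prop :=
  forall A : {set T}, A != set0 -> a \in A -> b \in A ->
    p a A / p b A = p a [set a; b] / p b [set a; b].

Definition ISA1 p : Prop :=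
  forall (A : {set T}) (a b x : T),
    A != set0 -> a \in A -> b \in A -> x \notin A ->
    p a [set a; x] / p x [set a; x] = p a [set a; b; x] / p x [set a; b; x] ->
    p b [set b; x] / p x [set b; x] = p b [set a; b; x] / p x [set a; b; x] ->
    p a A / p b A = p a (x |: A) / p b (x |: A).

Definition ISA2 p : Prop :=
  forall (A B C : {set T}) (a b x : T),
    A != set0 -> B != set0 -> C != set0 ->
    a \in A :&: B -> b \in A :&: C -> x \in B :&: C ->
    p a [set a; x] / p x [set a; x] <> p a B / p x B ->
    p b [set b; x] / p x [set b; x] <> p b C / p x C ->
    p a A / p b A = p a (x |: A) / p b (x |: A).

(* (P, u, v) is an NSC representation of p: P is a partition of T
   (blocks X_i), u > 0, v >= 0 on subsets of blocks (v only matters there),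
   v(empty) = 0, and the nested formula holds. *)
Definition NSC_rep p P u v : Prop :=
  partition P [set: T] /\
  (forall a, 0 < u a) /\
  v set0 = 0 /\
  (forall S : {set T}, (exists2 Xi, Xi \in P & S \subset Xi) -> 0 <= v S) /\
  (forall A : {set T}, A != set0 ->
     forall Xi, Xi \in P -> forall a, a \in A :&: Xi ->
       p a A = v (A :&: Xi) / (\sum_(Xj in P) v (A :&: Xj))
               * (u a / \sum_(b in A :&: Xi) u b)).

Definition degenerate_block u v (Xi : {set T}) : Prop :=
  exists2 a, a \in Xi &
    forall Ai : {set T}, Ai \subset Xi -> a \in Ai ->
      (\sum_(x in Ai) u x) / v Ai = u a / v [set a].

Definition nondegenerate P u v : Prop :=
  forall Xi Xj, Xi \in P -> Xj \in P ->
    degenerate_block u v Xi -> degenerate_block u v Xj -> Xi = Xj.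

Definition strict_rep P u v : Prop :=
  forall Xi, Xi \in P -> forall Ai : {set T}, Ai \subset Xi ->
    forall a x, a \in Ai -> x \in Xi :\: Ai ->
      (u a + u x) / u x = v [set a; x] / v [set x] ->
      (\sum_(a' in Ai) u a' + u x) / (\sum_(a' in Ai) u a')
        = v (x |: Ai) / v Ai.

Definition strict_nondeg_NSC p : Prop :=
  exists P u v, NSC_rep p P u v /\ nondegenerate P u v /\ strict_rep P u v.

End SCF.

(* Main.v *)
Require Import Defs.
From HB Require Import structures.
From mathcomp Require Import all_boot all_order all_algebra.
From mathcomp Require Import reals.
From mathcomp Require Import ring lra.
Set Implicit Arguments. Unset Strict Implicit. Unset Printing Implicit Defensive.
Import Order.TTheory GRing.Theory Num.Theory.
Local Open Scope ring_scope.

Section Gen.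
Variables (R : realType) (T : finType) (p : T -> {set T} -> R).
Hypothesis pos : positive_scf p.

Lemma p_gt0 a (A : {set T}) : a \in A -> 0 < p a A.
Proof.
move=> aA; have A0 : A != set0 by apply/set0Pn; exists a.
by have [_ [_ H]] := pos A0; apply: H.
Qed.

Lemma p_neq0 a (A : {set T}) : a \in A -> p a A != 0.
Proof. by move=> aA; rewrite gt_eqF // p_gt0. Qed.

Lemma set2_in1 (a b : T) : a \in [set a; b]. Proof. by rewrite !inE eqxx. Qed.
Lemma set2_in2 (a b : T) : b \in [set a; b]. Proof. by rewrite !inE eqxx orbT. Qed.

Lemma sum_set1 (F : T -> R) x : \sum_(c in [set x]) F c = F x.
Proof. by rewrite (big_pred1 x) // => i; rewrite !inE. Qed.

Lemma ratio_mul (A : {set T}) a b c : b \in A -> c \in A ->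
  p a A / p b A * (p b A / p c A) = p a A / p c A.
Proof.
move=> bA cA; have hb := p_neq0 bA; have hc := p_neq0 cA.
by field; rewrite hb hc.
Qed.

Lemma setI_notin (x : T) (X A : {set T}) : x \notin X -> (x |: A) :&: X = A :&: X.
Proof.
move=> xX; apply/setP=> y; rewrite !inE; case: (eqVneq y x) => [->|] //=.
by rewrite (negbTE xX) andbF.
Qed.

Lemma setI_in (x : T) (X A : {set T}) : x \in X -> (x |: A) :&: X = x |: (A :&: X).
Proof.
move=> xX; apply/setP=> y; rewrite !inE; case: (eqVneq y x) => [->|] //=.
Qed.

Section NSC.
Variables (P : {set {set T}}) (u : T -> R) (v : {set T} -> R).
Hypothesis H : NSC_rep p P u v.

Definition U (S : {set T}) := \sum_(c in S) u c.
Definition h (S : {set T}) a := v S * (u a / U S).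
Definition D (A : {set T}) := \sum_(Xj in P) v (A :&: Xj).

Lemma partP : partition P [set: T]. Proof. by case: H. Qed.
Lemma upos a : 0 < u a. Proof. by case: H => _ []. Qed.
Lemma tiP : trivIset P. Proof. by case/and3P: partP. Qed.
Lemma blockP a : pblock P a \in P.
Proof. by apply: pblock_mem; rewrite (cover_partition partP) inE. Qed.
Lemma in_block a : a \in pblock P a.
Proof. by rewrite mem_pblock (cover_partition partP) inE. Qed.
Lemma blockE X a : X \in P -> a \in X -> X = pblock P a.
Proof. by move=> XP aX; rewrite (def_pblock tiP XP aX). Qed.

Lemma U_gt0 (S : {set T}) a : a \in S -> 0 < U S.
Proof.
move=> aS; rewrite /U (bigD1 a) //=; apply: lt_le_trans (upos a) _.
by rewrite lerDl sumr_ge0 // => i _; rewrite ltW // upos.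
Qed.

Lemma nsc_p (A X : {set T}) a : A != set0 -> X \in P -> a \in A :&: X ->
  p a A = h (A :&: X) a / D A.
Proof.
move=> A0 XP aAX; case: H => _ [_ [_ [_ F]]]; rewrite (F A A0 X XP a aAX).
by rewrite /h /D mulrAC.
Qed.

Lemma D_neq0 (A : {set T}) a : a \in A -> D A != 0.
Proof.
move=> aA; have A0 : A != set0 by apply/set0Pn; exists a.
have aAX : a \in A :&: pblock P a by rewrite inE aA in_block.
apply/eqP=> D0; have := p_neq0 aA; rewrite (nsc_p A0 (blockP a) aAX) D0.
by rewrite invr0 mulr0 eqxx.
Qed.

Lemma h_neq0 (A X : {set T}) a : a \in A -> X \in P -> a \in X -> h (A :&: X) a != 0.
Proof.
move=> aA XP aX; have A0 : A != set0 by apply/set0Pn; exists a.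
have aAX : a \in A :&: X by rewrite inE aA aX.
apply/eqP=> h0; have := p_neq0 aA; rewrite (nsc_p A0 XP aAX) h0.
by rewrite mul0r eqxx.
Qed.

Lemma nsc_ratio (A X Y : {set T}) a b : a \in A -> b \in A ->
  X \in P -> a \in X -> Y \in P -> b \in Y ->
  p a A / p b A = h (A :&: X) a / h (A :&: Y) b.
Proof.
move=> aA bA XP aX YP bY; have A0 : A != set0 by apply/set0Pn; exists a.
rewrite (nsc_p A0 XP (a:=a)) ?inE ?aA ?aX // (nsc_p A0 YP (a:=b)) ?inE ?bA ?bY //.
have := D_neq0 aA; have := h_neq0 bA YP bY => h1 h2.
by field; rewrite h1 h2.
Qed.

Lemma h_same (S : {set T}) a b : h S a != 0 -> b \in S -> h S a / h S b = u a / u b.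
Proof.
rewrite /h => ha bS; have vS : v S != 0 by apply: contraNneq ha => ->; rewrite mul0r.
have US : U S != 0 by rewrite gt_eqF // (U_gt0 bS).
have ub : u b != 0 by rewrite gt_eqF // upos.
by field; rewrite vS US ub.
Qed.

Lemma nsc_same (A X : {set T}) a b : a \in A -> b \in A -> X \in P -> a \in X -> b \in X ->
  p a A / p b A = u a / u b.
Proof.
move=> aA bA XP aX bX; rewrite (nsc_ratio aA bA XP aX XP bX) h_same //.
  exact: h_neq0.
by rewrite inE bA bX.
Qed.


Lemma same_block (X Y : {set T}) x : X \in P -> Y \in P -> x \in X -> x \in Y -> X = Y.
Proof. by move=> XP YP xX xY; rewrite (blockE XP xX) (blockE YP xY). Qed.

Ltac setsolve := apply/setP => ?; rewrite !inE;
  repeat (rewrite ?eqxx /=; match goal with |- context [?y == ?z] => case: (eqVneq y z) => [->|?] end).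

Lemma h_deg (S : {set T}) a : U S / v S = u a / v [set a] -> h S a = v [set a].
Proof.
move=> E; have ua : u a != 0 by rewrite gt_eqF // upos.
have E' : v S / U S = v [set a] / u a by rewrite -invf_div E invf_div.
by rewrite /h mulrCA E' mulrCA divff // mulr1.
Qed.

Lemma strict_of_ISA1 : ISA1 p ->
  (forall X a, X \in P -> a \in X -> exists b, b \notin X) -> strict_rep P u v.
Proof.
move=> I1 Hout X XP Ai AiX a x aAi /setDP[xX xAi] E.
change ((U Ai + u x) / U Ai = v (x |: Ai) / v Ai).
have aX : a \in X by apply: (subsetP AiX).
have [b bX] := Hout X a XP aX.
set Y := pblock P b.
have YP : Y \in P := blockP b. have bY : b \in Y := in_block b.
have XY : X != Y by apply: contraNneq bX => ->.
have xY : x \notin Y by apply: contraNN XY => xY; rewrite (same_block XP YP xX xY).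
have aY : a \notin Y by apply: contraNN XY => aY; rewrite (same_block XP YP aX aY).
have xb : x != b by apply: contraNneq bX => <-.
set A := b |: Ai.
have A0 : A != set0 by apply/set0Pn; exists b; rewrite !inE eqxx.
have aA : a \in A by rewrite !inE aAi orbT.
have bA : b \in A by rewrite !inE eqxx.
have xA : x \notin A by rewrite !inE negb_or xb xAi.
set Mn := [set a; b; x].
have aM : a \in Mn by rewrite !inE eqxx.
have bM : b \in Mn by rewrite !inE eqxx !orbT.
have xM : x \in Mn by rewrite !inE eqxx !orbT.
have H1 : p a [set a; x] / p x [set a; x] = p a Mn / p x Mn.
  by rewrite (nsc_same (set2_in1 a x) (set2_in2 a x) XP aX xX) (nsc_same aM xM XP aX xX).
have bxY : [set b; x] :&: Y = [set b].
  by setsolve; rewrite ?bY ?(negbTE xY) ?andbT ?andbF.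
have bxX : [set b; x] :&: X = [set x].
  by setsolve; rewrite ?xX ?(negbTE bX) ?andbT ?andbF.
have MY : Mn :&: Y = [set b].
  by setsolve; rewrite ?bY ?(negbTE aY) ?(negbTE xY) ?andbT ?andbF ?orbT ?orbF.
have MX : Mn :&: X = [set a; x].
  by setsolve; rewrite ?aX ?xX ?(negbTE bX) ?andbT ?andbF ?orbT ?orbF.
have n2 := h_neq0 (set2_in2 b x) XP xX.
rewrite bxX in n2.
have hx : h [set x] x = v [set x] by rewrite /h /U (sum_set1 u x) divff ?mulr1 // gt_eqF ?upos.
have ax : a != x by apply: contraNneq xAi => <-.
have Uax : U [set a; x] = u a + u x by rewrite /U big_setU1 ?sum_set1 // inE.
have vx0 : v [set x] != 0 by rewrite -hx.
have ux : u x != 0 by rewrite gt_eqF ?upos.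
have uax : u a + u x != 0 by rewrite gt_eqF // addr_gt0 ?upos.
have H2 : p b [set b; x] / p x [set b; x] = p b Mn / p x Mn.
  rewrite (nsc_ratio (set2_in1 b x) (set2_in2 b x) YP bY XP xX).
  rewrite (nsc_ratio bM xM YP bY XP xX) bxY bxX MY MX; congr (_ / _).
  rewrite hx /h Uax.
  have -> : v [set a; x] = (u a + u x) / u x * v [set x] by rewrite E divfK.
  by field; rewrite ux uax.
have C := I1 A a b x A0 aA bA xA H1 H2.
have xaA : a \in x |: A by rewrite in_setU1 aA orbT.
have xbA : b \in x |: A by rewrite in_setU1 bA orbT.
rewrite (nsc_ratio aA bA XP aX YP bY) (nsc_ratio xaA xbA XP aX YP bY) in C.
rewrite [(x |: A) :&: Y]setI_notin // in C.
have nY := h_neq0 bA YP bY.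
have C2 : h (A :&: X) a = h ((x |: A) :&: X) a.
  by move: C => /(congr1 (fun t => t * h (A :&: Y) b)); rewrite !divfK.
have AX : A :&: X = Ai.
  apply/setP=> y; rewrite !inE; case: (eqVneq y b) => [->|] /=.
    by rewrite (negbTE bX); apply/esym/negbTE; apply: contraNN bX; apply: (subsetP AiX).
  by move=> _; apply/andP/idP => [[]//|yA]; split=> //; apply: (subsetP AiX).
rewrite setI_in // AX in C2.
have aAi' : a \in Ai := aAi.
have hA := h_neq0 aA XP aX; rewrite AX in hA.
have vA : v Ai != 0 by apply: contraNneq hA; rewrite /h => ->; rewrite mul0r.
have UA : U Ai != 0 by rewrite gt_eqF // (U_gt0 aAi).
have Ux : U (x |: Ai) = u x + U Ai by rewrite /U big_setU1.
have ua : u a != 0 by rewrite gt_eqF ?upos.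
have UAx : u x + U Ai != 0 by rewrite gt_eqF // addr_gt0 ?upos ?(U_gt0 aAi).
move: C2; rewrite /h Ux => C2.
have vAx : v (x |: Ai) = v Ai * (u x + U Ai) / U Ai.
  apply: (mulIf (x := u a / (u x + U Ai))); first by rewrite mulf_neq0 ?invr_eq0.
  by rewrite -C2; field; rewrite UA UAx.
by rewrite vAx; field; rewrite vA UA.
Qed.

Section Strict.
Hypothesis Hs : strict_rep P u v.

Lemma strict_step (A X Y M : {set T}) a b x :
  X \in P -> Y \in P -> a \in A -> a \in X -> x \in X -> x \notin A ->
  b \in Y -> X != Y -> b \in M -> x \in M ->
  M :&: Y = [set b] -> M :&: X = [set a; x] ->
  p b [set b; x] / p x [set b; x] = p b M / p x M ->
  h (A :&: X) a = h ((x |: A) :&: X) a.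
Proof.
move=> XP YP aA aX xX xA bY XY bM xM MY MX E.
have xY : x \notin Y by apply: contraNN XY => xY; rewrite (same_block XP YP xX xY).
have bX : b \notin X by apply: contraNN XY => bX; rewrite (same_block XP YP bX bY).
have ax : a != x by apply: contraNneq xA => <-.
have bxY : [set b; x] :&: Y = [set b].
  by setsolve; rewrite ?bY ?(negbTE xY) ?andbT ?andbF.
have bxX : [set b; x] :&: X = [set x].
  by setsolve; rewrite ?xX ?(negbTE bX) ?andbT ?andbF.
have n1 := h_neq0 (set2_in1 b x) YP bY.
have n2 := h_neq0 (set2_in2 b x) XP xX.
have n3 := h_neq0 xM XP xX.
rewrite (nsc_ratio (set2_in1 b x) (set2_in2 b x) YP bY XP xX) in E.
rewrite (nsc_ratio bM xM YP bY XP xX) bxY bxX MY MX in E.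
rewrite bxY in n1; rewrite bxX in n2; rewrite MX in n3.
have E2 : h [set x] x = h [set a; x] x.
  by move: E => /(mulfI n1)/invr_inj.
have hx : h [set x] x = v [set x] by rewrite /h /U (sum_set1 u x) divff ?mulr1 // gt_eqF ?upos.
have Uax : U [set a; x] = u a + u x by rewrite /U big_setU1 ?sum_set1 // inE.
have vx0 : v [set x] != 0 by rewrite -hx.
have Eax : (u a + u x) / u x = v [set a; x] / v [set x].
  move: E2; rewrite hx /h Uax => ->.
  have ux : u x != 0 by rewrite gt_eqF ?upos.
  have uax : u a + u x != 0 by rewrite gt_eqF // addr_gt0 ?upos.
  have vax : v [set a; x] != 0.
    by apply: contraNneq n3; rewrite /h => ->; rewrite mul0r.
  by field; rewrite ux uax vax.
have AXs : A :&: X \subset X by apply: subsetIr.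
have aAX : a \in A :&: X by rewrite inE aA aX.
have xAX : x \in X :\: (A :&: X) by rewrite !inE xX (negbTE xA).
have St := Hs XP AXs aAX xAX Eax.
have hA := h_neq0 aA XP aX.
have vA : v (A :&: X) != 0 by apply: contraNneq hA; rewrite /h => ->; rewrite mul0r.
have UA : U (A :&: X) != 0 by rewrite gt_eqF // (U_gt0 aAX).
have Ev : v (x |: (A :&: X)) = (U (A :&: X) + u x) / U (A :&: X) * v (A :&: X).
  by rewrite [_ / _]St; field; rewrite vA.
have Ux : U (x |: (A :&: X)) = u x + U (A :&: X).
  by rewrite /U big_setU1 // inE negb_and xA.
have uxA : U (A :&: X) + u x != 0 by rewrite gt_eqF // addr_gt0 ?upos ?(U_gt0 aAX).
by rewrite setI_in // /h Ev Ux; field; rewrite addrC uxA UA.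
Qed.

Lemma nsc_ISA1 : ISA1 p.
Proof.
move=> A a b x A0 aA bA xA H1 H2.
have xaA : a \in x |: A by rewrite !inE aA orbT.
have xbA : b \in x |: A by rewrite !inE bA orbT.
set X := pblock P a; set Y := pblock P b.
have XP : X \in P := blockP a. have YP : Y \in P := blockP b.
have aX : a \in X := in_block a. have bY : b \in Y := in_block b.
have [XY|XY] := eqVneq X Y.
  have bX : b \in X by rewrite XY.
  by rewrite (nsc_same aA bA XP aX bX) (nsc_same xaA xbA XP aX bX).
rewrite (nsc_ratio aA bA XP aX YP bY) (nsc_ratio xaA xbA XP aX YP bY).
have aY : a \notin Y by apply: contraNN XY => aY; rewrite (same_block XP YP aX aY).
have bX : b \notin X by apply: contraNN XY => bX; rewrite (same_block XP YP bX bY).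
have [xX|xX] := boolP (x \in X).
  have xY : x \notin Y by apply: contraNN XY => xY; rewrite (same_block XP YP xX xY).
  rewrite [(x |: A) :&: Y]setI_notin //.
  congr (_ / _); apply: (strict_step (M := [set a; b; x])) (YP) _ _ _ _ _ _ _ _ _ _ H2 => //.
  - by rewrite !inE eqxx orbT.
  - by rewrite !inE eqxx !orbT.
  - by setsolve; rewrite ?bY ?aX ?xX ?(negbTE aY) ?(negbTE xY) ?(negbTE bX) ?andbT ?andbF ?orbT ?orbF.
  - by setsolve; rewrite ?bY ?aX ?xX ?(negbTE aY) ?(negbTE xY) ?(negbTE bX) ?andbT ?andbF ?orbT ?orbF.
have [xY|xY] := boolP (x \in Y).
  rewrite [(x |: A) :&: X]setI_notin //.
  congr (_ / _); apply: (strict_step (M := [set a; b; x])) (XP) _ _ _ _ _ _ _ _ _ _ H1 => //.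
  - by rewrite eq_sym.
  - by rewrite !inE eqxx.
  - by rewrite !inE eqxx !orbT.
  - by setsolve; rewrite ?bY ?aX ?xY ?(negbTE aY) ?(negbTE xX) ?(negbTE bX) ?andbT ?andbF ?orbT ?orbF.
  - by setsolve; rewrite ?bY ?aX ?xY ?(negbTE aY) ?(negbTE xX) ?(negbTE bX) ?andbT ?andbF ?orbT ?orbF.
by rewrite !setI_notin.
Qed.
End Strict.

Lemma nsc_ISA2 : ISA2 p.
Proof.
move=> A B C a b x A0 B0 C0 /setIP[aA aB] /setIP[bA bC] /setIP[xB xC] Ha Hb.
have [xA|xA] := boolP (x \in A).
  by have -> : x |: A = A by apply/setUidPr; rewrite sub1set.
have xaA : a \in x |: A by rewrite !inE aA orbT.
have xbA : b \in x |: A by rewrite !inE bA orbT.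
set X := pblock P a; set Y := pblock P b; set Z := pblock P x.
have XP : X \in P := blockP a. have YP : Y \in P := blockP b. have ZP : Z \in P := blockP x.
have aX : a \in X := in_block a. have bY : b \in Y := in_block b. have xZ : x \in Z := in_block x.
have xX : x \notin X.
  apply: contra_notN Ha => xX.
  by rewrite (nsc_same (set2_in1 a x) (set2_in2 a x) XP aX xX) (nsc_same aB xB XP aX xX).
have xY : x \notin Y.
  apply: contra_notN Hb => xY.
  by rewrite (nsc_same (set2_in1 b x) (set2_in2 b x) YP bY xY) (nsc_same bC xC YP bY xY).
have [XY|XY] := eqVneq X Y.
  have bX : b \in X by rewrite XY.
  by rewrite (nsc_same aA bA XP aX bX) (nsc_same xaA xbA XP aX bX).
by rewrite (nsc_ratio aA bA XP aX YP bY) (nsc_ratio xaA xbA XP aX YP bY) !setI_notin.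
Qed.

End NSC.
End Gen.

Section Hard.
Variables (R : realType) (T : finType) (p : T -> {set T} -> R).
Hypothesis pos : positive_scf p.
Hypothesis I1 : ISA1 p.
Hypothesis I2 : ISA2 p.

Local Notation rho A a b := (p a A / p b A).

Definition simb a b := [forall A : {set T},
  ((A != set0) && (a \in A) && (b \in A)) ==> (rho A a b == rho [set a; b] a b)].

Lemma simbP a b : reflect (simp p a b) (simb a b).
Proof.
apply: (iffP forallP) => [H A A0 aA bA | H A].
  by have /implyP/(_ _)/eqP := H A; apply; rewrite A0 aA bA.
by apply/implyP => /andP[/andP[A0 aA] bA]; apply/eqP; apply: H.
Qed.

Lemma simb_eq a b (A : {set T}) : simb a b -> a \in A -> b \in A -> rho A a b = rho [set a; b] a b.
Proof.
move/simbP=> H aA bA; apply: H => //; by apply/set0Pn; exists a.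
Qed.

Lemma simb_refl a : simb a a.
Proof.
apply/simbP=> A A0 aA _.
by rewrite !divff // (p_neq0 pos) // set2_in1.
Qed.

Lemma simb_sym a b : simb a b -> simb b a.
Proof.
move=> H; apply/simbP=> A A0 bA aA.
have := simb_eq H aA bA => E.
by rewrite -[LHS]invf_div E invf_div [[set b; a]]setUC.
Qed.

Lemma simb_trans a b c : simb a b -> simb b c -> simb a c.
Proof.
move=> ab bc.
have K : forall A : {set T}, a \in A -> c \in A ->
   rho A a c = rho [set a; b] a b * rho [set b; c] b c.
  move=> A aA cA.
  have key : forall A : {set T}, a \in A -> c \in A -> b \in A ->
       rho A a c = rho [set a; b] a b * rho [set b; c] b c.
    move=> A' aA' cA' bA'.
    by rewrite -(ratio_mul pos a bA' cA') (simb_eq ab aA' bA') (simb_eq bc bA' cA').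
  have [bA|bA] := boolP (b \in A); first exact: key.
  have A0 : A != set0 by apply/set0Pn; exists a.
  have M3 : [set a; c; b] = [set a; c; b] by [].
  have aM : a \in [set a; c; b] by rewrite !inE eqxx.
  have bM : b \in [set a; c; b] by rewrite !inE eqxx !orbT.
  have cM : c \in [set a; c; b] by rewrite !inE eqxx !orbT.
  rewrite (I1 A0 aA cA bA); last first.
  - by rewrite (simb_eq (simb_sym bc) cM bM).
  - by rewrite (simb_eq ab aM bM).
  by apply: key; rewrite !inE ?aA ?cA ?eqxx ?orbT.
apply/simbP=> A A0 aA cA.
by rewrite (K A aA cA) (K _ (set2_in1 a c) (set2_in2 a c)).
Qed.

Lemma not_simb_ex a x : ~~ simb a x ->
  exists B : {set T}, [/\ B != set0, a \in B, x \in B & rho [set a; x] a x <> rho B a x].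
Proof.
move/forallPn=> [B]; rewrite negb_imply => /andP[/andP[/andP[B0 aB] xB] /eqP ne].
by exists B; split => // E; apply: ne.
Qed.

Lemma add_irrel (A : {set T}) a b x : ~~ simb a x -> ~~ simb b x -> a \in A -> b \in A ->
  rho (x |: A) a b = rho A a b.
Proof.
move=> ax bx aA bA.
have [B [B0 aB xB neB]] := not_simb_ex ax.
have [C [C0 bC xC neC]] := not_simb_ex bx.
have A0 : A != set0 by apply/set0Pn; exists a.
apply/esym; apply: (I2 (B:=B) (C:=C)) => //; by rewrite inE ?aA ?aB ?bA ?bC ?xB ?xC.
Qed.

Lemma add_set a b n : forall (Ds A0 : {set T}), #|Ds| = n -> a \in A0 -> b \in A0 ->
  (forall y, y \in Ds -> ~~ simb a y && ~~ simb b y) ->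
  rho (A0 :|: Ds) a b = rho A0 a b.
Proof.
elim: n => [|n IH] Ds A0 cD aA bA HD.
  by move/eqP: cD; rewrite cards_eq0 => /eqP ->; rewrite setU0.
have : (0 < #|Ds|)%N by rewrite cD.
rewrite card_gt0 => /set0Pn[y yD].
have cD' : #|Ds :\ y| = n by move: cD; rewrite (cardsD1 y) yD => -[].
rewrite -(setD1K yD) setUCA.
have /andP[ay by'] := HD y yD.
rewrite add_irrel //; last by rewrite inE bA.
  by apply: IH => // z; rewrite inE => /andP[_ /HD].
by rewrite inE aA.
Qed.

Lemma restrict (A A' : {set T}) a b : a \in A -> b \in A -> a \in A' -> b \in A' ->
  (forall y, simb a y || simb b y -> (y \in A) = (y \in A')) ->
  rho A a b = rho A' a b.
Proof.
move=> aA bA aA' bA' H.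
have sub : forall (X Y : {set T}), a \in X -> b \in X -> a \in Y -> b \in Y ->
    (forall y, simb a y || simb b y -> (y \in X) = (y \in Y)) ->
    rho X a b = rho (X :&: Y) a b.
  move=> X Y aX bX aY bY HXY.
  have -> : rho X a b = rho (X :&: Y :|: X :\: Y) a b by rewrite setID.
  apply: (add_set (n := #|X :\: Y|)) => //.
  - by rewrite inE aX aY.
  - by rewrite inE bX bY.
  move=> y; rewrite inE => /andP[yY yX]; rewrite -negb_or.
  by apply: contra yY => /HXY <-.
rewrite (sub A A') // (sub A' A) //; first by rewrite setIC.
by move=> y /H ->.
Qed.

Lemma simb_link c t t' : simb c t -> simb c t' -> simb t t'.
Proof. by move=> ct ct'; apply: simb_trans (simb_sym ct) ct'. Qed.

Lemma Cl_eq a a' : simb a a' -> [set y | simb a' y] = [set y | simb a y].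
Proof.
move=> aa'; apply/setP=> y; rewrite !inE; apply/idP/idP => H.
  exact: simb_trans aa' H.
exact: simb_link aa' H.
Qed.

Section Three.
Hypothesis three : exists a b c : T, ~ simp p a b /\ ~ simp p b c /\ ~ simp p a c.

Lemma third a b : exists e, ~~ simb a e && ~~ simb b e.
Proof.
have [x [y [z [xy [yz xz]]]]] := three.
have nxy : ~~ simb x y by apply/simbP.
have nyz : ~~ simb y z by apply/simbP.
have nxz : ~~ simb x z by apply/simbP.
have [Hx|Hx] := boolP (~~ simb a x && ~~ simb b x); first by exists x.
have [Hy|Hy] := boolP (~~ simb a y && ~~ simb b y); first by exists y.
have [Hz|Hz] := boolP (~~ simb a z && ~~ simb b z); first by exists z.
exfalso; move: Hx Hy Hz; rewrite -!negb_or !negbK.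
case/orP=> Hx; case/orP=> Hy; case/orP=> Hz.
all: first [ by move: nxy; rewrite (simb_link Hx Hy)
           | by move: nyz; rewrite (simb_link Hy Hz)
           | by move: nxz; rewrite (simb_link Hx Hz) ].
Qed.

Definition Cl a := [set y | simb a y].
Definition e_of a := odflt a [pick e | ~~ simb a e].

Lemma e_ofP a : ~~ simb a (e_of a).
Proof.
rewrite /e_of; case: pickP => [e //|H].
have [e /andP[ae _]] := third a a.
by move: (H e); rewrite ae.
Qed.

Definition M a (S : {set T}) := S :|: ~: Cl a.
Definition W a (S : {set T}) := rho (M a S) a (e_of a) * p (e_of a) [set: T].

Lemma inM_out a S y : ~~ simb a y -> y \in M a S.
Proof. by move=> ay; rewrite !inE ay orbT. Qed.

Lemma W_any a (S : {set T}) e : a \in S -> ~~ simb a e ->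
  W a S = rho (M a S) a e * p e [set: T].
Proof.
move=> aS ae; rewrite /W; set e0 := e_of a.
have ae0 : ~~ simb a e0 := e_ofP a.
have eM : e \in M a S := inM_out S ae.
have e0M : e0 \in M a S := inM_out S ae0.
rewrite -(ratio_mul pos a eM e0M).
have -> : rho (M a S) e e0 = rho [set: T] e e0.
  have [ee0|ee0] := boolP (simb e e0).
    by rewrite (simb_eq ee0 eM e0M) (simb_eq ee0 (in_setT e) (in_setT e0)).
  apply: restrict; rewrite ?in_setT //.
  move=> y /orP[] ey; rewrite in_setT; apply: inM_out; apply/negP => ay.
    by move: ae; rewrite (simb_trans ay (simb_sym ey)).
  by move: ae0; rewrite (simb_trans ay (simb_sym ey)).
have ne0 : p e0 [set: T] != 0 by rewrite (p_neq0 pos) ?in_setT.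
have ne1 : p e (M a S) != 0 by rewrite (p_neq0 pos).
by field; rewrite ne0 ne1.
Qed.

Lemma W_gt0 a (S : {set T}) : a \in S -> 0 < W a S.
Proof.
move=> aS; rewrite /W; have ae := e_ofP a.
rewrite mulr_gt0 ?divr_gt0 //; apply: (p_gt0 pos); rewrite ?in_setT //.
  by rewrite inE aS.
exact: inM_out.
Qed.

Definition u a := p a (Cl a).

Lemma u_gt0 a : 0 < u a.
Proof. by apply: (p_gt0 pos); rewrite inE simb_refl. Qed.

Lemma same_ratio (A : {set T}) a b : simb a b -> a \in A -> b \in A -> rho A a b = u a / u b.
Proof.
move=> ab aA bA; rewrite (simb_eq ab aA bA) /u /Cl (Cl_eq ab).
by rewrite (simb_eq ab (A := [set y | simb a y])) // inE ?simb_refl.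
Qed.

Lemma W_same a a' (S : {set T}) : simb a a' -> a \in S -> a' \in S ->
  W a S / W a' S = u a / u a'.
Proof.
move=> aa' aS a'S; set e := e_of a.
have ae : ~~ simb a e := e_ofP a.
have a'e : ~~ simb a' e by apply: contra ae => /(simb_trans aa').
rewrite (W_any aS ae) (W_any a'S a'e).
have -> : M a' S = M a S by rewrite /M /Cl (Cl_eq aa').
have eM : e \in M a S := inM_out S ae.
have aM : a \in M a S by rewrite inE aS.
have a'M : a' \in M a S by rewrite inE a'S.
have ne : p e [set: T] != 0 by rewrite (p_neq0 pos) ?in_setT.
have ne2 : p e (M a S) != 0 by rewrite (p_neq0 pos).
have ne3 : p a' (M a S) != 0 by rewrite (p_neq0 pos).
rewrite -(same_ratio aa' aM a'M).
by field; rewrite ne ne2 ne3.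
Qed.

Lemma cross (A : {set T}) a b : a \in A -> b \in A -> ~~ simb a b ->
  rho A a b = W a (A :&: Cl a) / W b (A :&: Cl b).
Proof.
move=> aA bA nab.
have [e /andP[ae be]] := third a b.
set N := (A :&: (Cl a :|: Cl b)) :|: [set y | ~~ simb a y && ~~ simb b y].
have aN : a \in N by rewrite !inE aA simb_refl.
have bN : b \in N by rewrite !inE bA simb_refl orbT.
have eN : e \in N by rewrite !inE ae be orbT.
have -> : rho A a b = rho N a b.
  apply: restrict => // y Hy; rewrite !inE Hy andbT -negb_or Hy orbF.
  by [].
have aS : a \in A :&: Cl a by rewrite !inE aA simb_refl.
have bS : b \in A :&: Cl b by rewrite !inE bA simb_refl.
have key : forall c d, c \in A -> ~~ simb c e -> (c = a /\ d = b \/ c = b /\ d = a) ->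
    rho N c e = W c (A :&: Cl c) / p e [set: T].
  move=> c d cA ce cd.
  have cS : c \in A :&: Cl c by rewrite !inE cA simb_refl.
  have ne : p e [set: T] != 0 by rewrite (p_neq0 pos) ?in_setT.
  rewrite (W_any cS ce) mulfK //.
  have cN : c \in N by case: cd => -[-> _].
  have cM : c \in M c (A :&: Cl c) by rewrite inE cS.
  apply: restrict => // [|y]; first exact: inM_out.
  have [cy|cy] /= := boolP (simb c y).
    by rewrite !inE cy /=; case: cd => -[? ?]; subst c;
      rewrite cy ?orbT ?andbT /= ?andbF ?orbF ?andbT ?orbF.
  move=> ey; rewrite (inM_out _ cy).
  have dey : ~~ simb a y && ~~ simb b y.
    by apply/andP; split; apply/negP => H; [move: ae | move: be];
      rewrite (simb_trans H (simb_sym ey)).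
  by rewrite !inE; apply/orP; right.
have ne1 : p e N != 0 by rewrite (p_neq0 pos).
have ne2 : p b N != 0 by rewrite (p_neq0 pos).
have E1 := key a b aA ae (or_introl (conj erefl erefl)).
have E2 := key b a bA be (or_intror (conj erefl erefl)).
have -> : rho N a b = rho N a e / rho N b e by field; rewrite ne1 ne2.
rewrite E1 E2.
have ne : p e [set: T] != 0 by rewrite (p_neq0 pos) ?in_setT.
have nW : W b (A :&: Cl b) != 0 by rewrite gt_eqF // W_gt0.
by field; rewrite ne nW.
Qed.

Definition Pq := equivalence_partition simb [set: T].
Definition vq (S : {set T}) := \sum_(b in S) W b S.

Lemma simb_equiv : {in [set: T] & &, equivalence_rel simb}.
Proof.
move=> x y z _ _ _; split; first exact: simb_refl.
move=> xy; apply/idP/idP => H; first exact: simb_link xy H.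
exact: simb_trans xy H.
Qed.

Lemma Pq_part : partition Pq [set: T].
Proof. exact: equivalence_partitionP simb_equiv. Qed.

Lemma pblock_Cl a : pblock Pq a = Cl a.
Proof.
apply/setP=> y; rewrite inE pblock_equivalence_partition ?in_setT //.
exact: simb_equiv.
Qed.

Lemma Pq_Cl (X : {set T}) a : X \in Pq -> a \in X -> X = Cl a.
Proof.
move=> XP aX; rewrite -pblock_Cl (def_pblock _ XP aX) //.
by case/and3P: Pq_part.
Qed.

Lemma rep_formula (A X : {set T}) a : A != set0 -> X \in Pq -> a \in A :&: X ->
  p a A = vq (A :&: X) / (\sum_(Xj in Pq) vq (A :&: Xj)) * (u a / \sum_(b in A :&: X) u b).
Proof.
move=> A0 XP /setIP[aA aX].
have XC := Pq_Cl XP aX; subst X.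
set S := A :&: Cl a.
have aS : a \in S by rewrite inE aA inE simb_refl.
have Wa0 : W a S != 0 by rewrite gt_eqF // W_gt0.
have pa0 : p a A != 0 by rewrite (p_neq0 pos).
set k := W a S / p a A.
set F := fun b => W b (A :&: Cl b).
have HF : forall b, b \in A -> F b = p b A * k.
  move=> b bA; rewrite /F /k.
  have [ab|ab] := boolP (simb a b).
    rewrite /Cl (Cl_eq ab) -/(Cl a) -/S.
    have bS : b \in S by rewrite inE bA inE.
    have E1 := W_same (simb_sym ab) bS aS.
    have E2 := same_ratio (simb_sym ab) bA aA.
    have ub : u a != 0 by rewrite gt_eqF // u_gt0.
    by rewrite -[W b S](divfK Wa0) E1 -E2; field; rewrite pa0.
  have ba : ~~ simb b a by apply: contra ab; apply: simb_sym.
  have E := cross bA aA ba; rewrite -/S in E.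
  by rewrite -[W b _](divfK Wa0) -E; field; rewrite pa0.
have Hsum : \sum_(Xj in Pq) vq (A :&: Xj) = k.
  have E : \sum_(Xj in Pq) vq (A :&: Xj) =
      \sum_(Xj in Pq) \sum_(b in Xj) (if b \in A then F b else 0).
    apply: eq_bigr => Xj XjP; rewrite /vq -big_mkcondr /=.
    apply: eq_big => [b|b]; first by rewrite !inE andbC.
    rewrite !inE => /andP[bA bXj]; rewrite /F.
    by rewrite -(Pq_Cl XjP bXj).
  rewrite E -(set_partition_big _ Pq_part) -big_mkcondr /=.
  rewrite (eq_bigl (fun b => b \in A)) => [|b]; last by rewrite in_setT.
  rewrite (eq_bigr (fun b => p b A * k)) => [|b bA]; last exact: HF.
  by rewrite -mulr_suml; have [_ [-> _]] := pos A0; rewrite mul1r.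
have Hv : vq S = W a S / u a * \sum_(b in S) u b.
  rewrite /vq mulr_sumr; apply: eq_bigr => b bS.
  have ab : simb a b by move: bS; rewrite !inE => /andP[].
  have E1 := W_same (simb_sym ab) bS aS.
  have ua : u a != 0 by rewrite gt_eqF // u_gt0.
  have -> : W b S = W b S / W a S * W a S by rewrite divfK.
  by rewrite E1; field; rewrite ua.
rewrite Hsum Hv /k.
have ua : u a != 0 by rewrite gt_eqF // u_gt0.
have US : \sum_(b in S) u b != 0.
  rewrite gt_eqF // (bigD1 a) //=; apply: lt_le_trans (u_gt0 a) _.
  by rewrite lerDl sumr_ge0 // => i _; rewrite ltW // u_gt0.
by field; rewrite Wa0 pa0 ua US.
Qed.

Lemma hard_rep : NSC_rep p Pq u vq.
Proof.
split; first exact: Pq_part.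
split; first exact: u_gt0.
split; first by rewrite /vq big_set0.
split.
  move=> S _; apply: sumr_ge0 => b bS; exact/ltW/W_gt0.
move=> A A0 X XP a aAX; exact: rep_formula.
Qed.

Lemma hard_nondeg : Defs.nondegenerate Pq u vq.
Proof.
move=> Xi Xj XiP XjP [a aXi Ha] [b bXj Hb].
have HR := hard_rep.
have Hab : simb a b.
  apply/simbP => A A0 aA bA.
  rewrite (nsc_ratio pos HR aA bA XiP aXi XjP bXj).
  rewrite (nsc_ratio pos HR (set2_in1 a b) (set2_in2 a b) XiP aXi XjP bXj).
  rewrite !(h_deg HR) //; apply: Ha || apply: Hb; rewrite ?subsetIr // inE ?aA ?bA ?aXi ?bXj ?set2_in1 ?set2_in2 //.
by rewrite (Pq_Cl XiP aXi) (Pq_Cl XjP bXj) /Cl (Cl_eq Hab).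
Qed.

Lemma hard_strict : strict_rep Pq u vq.
Proof.
apply: (strict_of_ISA1 pos hard_rep I1) => X a XP aX.
have [b /andP[ab _]] := third a a.
by exists b; rewrite (Pq_Cl XP aX) inE.
Qed.

End Three.

End Hard.

Theorem theorem5 (R : realType) (T : finType) (p : T -> {set T} -> R) :
  positive_scf p ->
  (exists a b c : T, ~ simp p a b /\ ~ simp p b c /\ ~ simp p a c) ->
  (ISA1 p /\ ISA2 p <-> strict_nondeg_NSC p).
Proof.
move=> pos three; split.
  case=> I1 I2; exists (Pq p), (u p), (vq p); split; first exact: hard_rep.
  by split; [exact: hard_nondeg | exact: hard_strict].
case=> P [u [v [H [_ Hs]]]]; split; first exact: (nsc_ISA1 pos H Hs).
exact: (nsc_ISA2 pos H).
Qed.
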